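(* For every integer $s\ge 2$, there exist mutually unbiased equiangular tight frames $(v_1,\dots,v_k)$ and $(w_1,\dots,w_l)$ for $\mathbb{R}^m$, where $$k=2^{s-1}(2^s-1),\qquad l=2^{s-1}(2^s+1),\qquad m=\frac{2^{2s}-1}{3}.$$
   Context: A system of unit vectors $(v_1,\dots,v_n)$ in $\mathbb{R}^m$ is an equiangular tight frame if $|\langle v_i,v_j\rangle|$ is the same constant for all $i\ne j$ and $VV^\top=\frac{n}{m}\mathrm{I}_m$, where $V$ has columns $v_i$. Two equiangular tight frames $(v_1,\dots,v_k)$, $(w_1,\dots,w_l)$ for $\mathbb{R}^m$ are mutually unbiased if there is $c\in\mathbb{R}$ with $|\langle v_i,w_j\rangle|=c$ for all $i,j$. *)

(* Defs.v *)
(* Vectors in R^m are column vectors; a system of n vectors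
   is an m x n matrix V whose columns are the v_i. *)
From mathcomp Require Import all_boot all_order all_algebra.
From mathcomp Require Import reals.
Set Implicit Arguments. Unset Strict Implicit. Unset Printing Implicit Defensive.
Import Order.TTheory GRing.Theory Num.Theory.
Local Open Scope ring_scope.

Definition ip (R : realType) (m n p : nat) (V : 'M[R]_(m, n)) (W : 'M[R]_(m, p))
  (i : 'I_n) (j : 'I_p) : R :=
  \sum_(a < m) V a i * W a j.

Definition is_ETF (R : realType) (m n : nat) (V : 'M[R]_(m, n)) : Prop :=
  [/\ forall i : 'I_n, ip V V i i = 1,
      exists c : R, forall i j : 'I_n, i != j -> `|ip V V i j| = c
    & V *m V^T = (n%:R / m%:R)%:M].

Definition mutually_unbiased (R : realType) (m k l : nat)
  (V : 'M[R]_(m, k)) (W : 'M[R]_(m, l)) : Prop :=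
  exists c : R, forall (i : 'I_k) (j : 'I_l), `|ip V W i j| = c.

(* Main.v *)
Require Import Defs.
From mathcomp Require Import all_boot all_order all_algebra.
From mathcomp Require Import reals.
From mathcomp Require Import ring lra zify.
Set Implicit Arguments. Unset Strict Implicit. Unset Printing Implicit Defensive.
Import Order.TTheory GRing.Theory Num.Theory.
Local Open Scope ring_scope.

Definition pt := (bool * bool)%type.
Definition qf (x : pt) : bool := x.1 && x.2.
Definition bf (x y : pt) : bool := (x.1 && y.2) (+) (x.2 && y.1).
Definition sg (R : realType) (b : bool) : R := (-1) ^+ b.

Lemma sgT (R : realType) : sg R true = -1. Proof. by rewrite /sg expr1. Qed.
Lemma sgF (R : realType) : sg R false = 1. Proof. by rewrite /sg expr0. Qed.

Lemma sum_pt (R : realType) (F : pt -> R) :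
  \sum_(x : pt) F x = F (true,true) + F (true,false) + F (false,true) + F (false,false).
Proof.
rewrite (eq_bigr (fun p => F (p.1, p.2))); last by case.
rewrite -(pair_bigA _ (fun x1 x2 => F (x1, x2))) /= !big_bool /=.
by rewrite !addrA.
Qed.

Lemma coord0 (R : realType) (y z : pt) :
  \sum_(x : pt) sg R (bf y x) * sg R (bf x z) = 4 * (y == z)%:R.
Proof.
rewrite sum_pt; case: y z => [[] []] [[] []]; rewrite /bf /= ?sgT ?sgF; ring.
Qed.

Lemma coord1 (R : realType) (y z : pt) :
  \sum_(x : pt) sg R (qf x) * (sg R (bf y x) * sg R (bf x z)) =
  2 * (sg R (qf y) * sg R (qf z) * sg R (bf y z)).
Proof.
rewrite sum_pt; case: y z => [[] []] [[] []]; rewrite /bf /qf /= ?sgT ?sgF; ring.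
Qed.

Definition eps (R : realType) s (a : {ffun 'I_s -> pt}) : R := \prod_i sg R (qf (a i)).
Definition chi (R : realType) s (a b : {ffun 'I_s -> pt}) : R :=
  \prod_i sg R (bf (a i) (b i)).

Lemma sum_prod (R : realType) s (G : 'I_s -> pt -> R) :
  \sum_(b : {ffun 'I_s -> pt}) \prod_i G i (b i) = \prod_i \sum_x G i x.
Proof. by rewrite bigA_distr_bigA. Qed.

Lemma prod_ind (R : realType) s (a c : {ffun 'I_s -> pt}) :
  \prod_i ((a i == c i)%:R : R) = (a == c)%:R.
Proof.
case: (eqVneq a c) => [->|nac].
  by rewrite big1 // => i _; rewrite eqxx.
have [i hi] : exists i, a i != c i.
  apply/existsP; apply: contraR nac => /existsPn h; apply/eqP/ffunP => i.
  by apply/eqP; move: (h i); rewrite negbK.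
by rewrite (bigD1 i) //= (negbTE hi) mul0r.
Qed.

Lemma F0 (R : realType) s (a c : {ffun 'I_s -> pt}) :
  \sum_b chi R a b * chi R b c = (4 ^ s)%:R * (a == c)%:R.
Proof.
under eq_bigr => b _ do rewrite /chi -big_split /=.
rewrite (sum_prod (fun i x => sg R (bf (a i) x) * sg R (bf x (c i)))).

under eq_bigr => i _ do rewrite coord0.
by rewrite big_split /= prodr_const card_ord prod_ind natrX.
Qed.

Lemma F1 (R : realType) s (a c : {ffun 'I_s -> pt}) :
  \sum_b eps R b * (chi R a b * chi R b c) = (2 ^ s)%:R * (eps R a * eps R c * chi R a c).
Proof.
under eq_bigr => b _ do rewrite /chi /eps -!big_split /=.
rewrite (sum_prod (fun i x => sg R (qf x) * (sg R (bf (a i) x) * sg R (bf x (c i))))).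

under eq_bigr => i _ do rewrite coord1.
by rewrite big_split /= prodr_const card_ord natrX /eps /chi -!big_split.
Qed.

Lemma eps_pm (R : realType) s (a : {ffun 'I_s -> pt}) : eps R a = 1 \/ eps R a = -1.
Proof.
have : (eps R a == 1) || (eps R a == -1).
  rewrite /eps; apply: (big_ind (fun x : R => (x == 1) || (x == -1))).
  - by rewrite eqxx.
  - move=> x y /orP [] /eqP -> /orP [] /eqP ->; rewrite ?mulr1 ?mul1r ?mulrNN ?mulr1 ?eqxx ?orbT //.
  - by move=> i _; rewrite /sg; case: (qf (a i)); rewrite ?expr1 ?expr0 eqxx ?orbT.
by case/orP => /eqP ->; [left|right].
Qed.

Lemma chi_pm (R : realType) s (a b : {ffun 'I_s -> pt}) : `|chi R a b| = 1.
Proof.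
rewrite /chi normr_prod big1 // => i _.
by rewrite /sg; case: (bf _ _); rewrite ?expr1 ?expr0 ?normrN normr1.
Qed.

Lemma chi_aa (R : realType) s (a : {ffun 'I_s -> pt}) : chi R a a = 1.
Proof.
rewrite /chi big1 // => i _; rewrite /bf.
by case: (a i) => [[] []]; rewrite /= sgF.
Qed.

Lemma chi_sym (R : realType) s (a b : {ffun 'I_s -> pt}) : chi R a b = chi R b a.
Proof.
rewrite /chi; apply: eq_bigr => i _; rewrite /bf.
by case: (a i) => [[] []]; case: (b i) => [[] []].
Qed.

Definition pp (R : realType) s (a : {ffun 'I_s -> pt}) : bool := eps R a == -1.

Lemma eps_pp (R : realType) s (a : {ffun 'I_s -> pt}) :
  eps R a = if pp R a then -1 else 1.
Proof.
rewrite /pp; case: (eps_pm R a) => ->; rewrite ?eqxx //.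
have -> : ((1 : R) == -1) = false.
  by apply/negbTE/eqP => h; lra.
by [].
Qed.

Lemma sumF (R : realType) s (g : bool -> R) (a c : {ffun 'I_s -> pt}) :
  \sum_b g (pp R b) * (chi R a b * chi R b c) =
  (g true + g false) / 2 * ((4 ^ s)%:R * (a == c)%:R) +
  (g false - g true) / 2 * ((2 ^ s)%:R * (eps R a * eps R c * chi R a c)).
Proof.
rewrite -F0 -F1 !mulr_sumr -big_split /=; apply: eq_bigr => b _.
rewrite [eps R b]eps_pp; case: (pp R b).
  by field.
by field.
Qed.

Definition tau (R : realType) (x y : bool) : R :=
  if x && y then 1 else if ~~ x && ~~ y then -1 else Num.sqrt 3.

Definition Gam (R : realType) s (a b : {ffun 'I_s -> pt}) : R :=
  (2 ^ s)%:R * (a == b)%:R + tau R (pp R a) (pp R b) * chi R a b.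

Lemma sum_delta (R : realType) (T : finType) (a : T) (F : T -> R) :
  \sum_b (a == b)%:R * F b = F a.
Proof.
rewrite (bigD1 a) //= eqxx mul1r big1 ?addr0 // => b hb.
by rewrite eq_sym (negbTE hb) mul0r.
Qed.

Lemma GG (R : realType) s (g : bool -> R) (a c : {ffun 'I_s -> pt}) :
  let h t := g t * tau R (pp R a) t * tau R t (pp R c) in
  \sum_b g (pp R b) * (Gam R a b * Gam R b c) =
  (2 ^ s)%:R * (2 ^ s)%:R * g (pp R a) * (a == c)%:R
  + (2 ^ s)%:R * (g (pp R a) + g (pp R c)) * tau R (pp R a) (pp R c) * chi R a c
  + ((h true + h false) / 2 * ((4 ^ s)%:R * (a == c)%:R) +
  (h false - h true) / 2 * ((2 ^ s)%:R * (eps R a * eps R c * chi R a c))).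
Proof.
move=> h; rewrite -sumF.
set t := (2 ^ s)%:R : R.
transitivity (\sum_b ((a == b)%:R * (t * t * g (pp R b) * (b == c)%:R)
   + (a == b)%:R * (t * g (pp R b) * tau R (pp R b) (pp R c) * chi R b c)
   + (c == b)%:R * (t * g (pp R b) * tau R (pp R a) (pp R b) * chi R a b)
   + h (pp R b) * (chi R a b * chi R b c))).
  apply: eq_bigr => b _; rewrite /Gam /h -/t [(b == c)]eq_sym; ring.
rewrite !big_split /= !sum_delta.
congr (_ + _).
rewrite chi_sym; ring.
Qed.

Lemma sqrt3_mul (R : realType) (x : R) : x * Num.sqrt 3 * Num.sqrt 3 = x * 3.
Proof. by rewrite -mulrA -expr2 sqr_sqrtr // ler0n. Qed.

Lemma pp_eq (R : realType) s (a c : {ffun 'I_s -> pt}) : a = c -> pp R a = pp R c.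
Proof. by move->. Qed.

Lemma Gam_full (R : realType) s (a c : {ffun 'I_s -> pt}) :
  \sum_b Gam R a b * Gam R b c = 3 * (2 ^ s)%:R * Gam R a c.
Proof.
have := GG (fun _ => 1) a c; rewrite /= => E.
under eq_bigr => b _ do rewrite -[Gam R a b * _]mul1r.
rewrite E /Gam (_ : (4 ^ s)%:R = (2 ^ s)%:R * (2 ^ s)%:R :> R); last by rewrite -natrM -expnMn.

rewrite (eps_pp R a) (eps_pp R c).
case: (eqVneq a c) => [<-|nac].
  rewrite chi_aa ?eqxx; case: (pp R a); rewrite /tau /= ?sqrt3_mul; field; rewrite ?pnatr_eq0 //=.
rewrite ?(negbTE nac).
case: (pp R a); case: (pp R c); rewrite /tau /= ?sqrt3_mul; field; rewrite ?pnatr_eq0 //=.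
Qed.

Lemma Gam_block (R : realType) s (t0 : bool) (a c : {ffun 'I_s -> pt}) :
  pp R a = t0 -> pp R c = t0 ->
  \sum_(b | pp R b == t0) Gam R a b * Gam R b c = 3 * (2 ^ s)%:R / 2 * Gam R a c.
Proof.
move=> ha hc.
have := GG (fun t => (t == t0)%:R) a c; rewrite /= => E.
rewrite big_mkcond /=.
rewrite (eq_bigr (fun b => (pp R b == t0)%:R * (Gam R a b * Gam R b c))); last first.
  by move=> b _; case: (pp R b == t0); rewrite ?mul1r ?mul0r.
rewrite E /Gam (_ : (4 ^ s)%:R = (2 ^ s)%:R * (2 ^ s)%:R :> R); last by rewrite -natrM -expnMn.
rewrite (eps_pp R a) (eps_pp R c) ha hc.
case: (eqVneq a c) => [<-|nac].
  rewrite chi_aa ?eqxx; clear E; case: t0 {ha hc}; rewrite /tau /= ?sqrt3_mul; field; rewrite ?pnatr_eq0 //=.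
rewrite ?(negbTE nac).
clear E; case: t0 {ha hc}; rewrite /tau /= ?sqrt3_mul; field; rewrite ?pnatr_eq0 //=.
Qed.

Lemma cardsR (R : realType) s :
  let A1 := [set a : {ffun 'I_s -> pt} | pp R a] in
  let A0 := [set a : {ffun 'I_s -> pt} | ~~ pp R a] in
  (#|A1|%:R : R) = (2 ^ s)%:R * ((2 ^ s)%:R - 1) / 2 /\
  (#|A0|%:R : R) = (2 ^ s)%:R * ((2 ^ s)%:R + 1) / 2.
Proof.
move=> A1 A0.
have hA0 : A0 = ~: A1 by apply/setP => a; rewrite !inE.
have hsum : (#|A1| + #|A0|)%:R = (2 ^ s)%:R * (2 ^ s)%:R :> R.
  by rewrite hA0 cardsC card_ffun card_prod card_bool card_ord -natrM -expnMn.
pose z : {ffun 'I_s -> pt} := [ffun _ => (false, false)].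
have heps : \sum_(b : {ffun 'I_s -> pt}) eps R b = (2 ^ s)%:R.
  have ez : eps R z = 1 by rewrite /eps big1 // => i _; rewrite ffunE sgF.
  have cz : forall b, chi R z b = 1 by move=> b; rewrite /chi big1 // => i _; rewrite ffunE sgF.
  have cz' : forall b, chi R b z = 1 by move=> b; rewrite chi_sym cz.
  transitivity (\sum_b eps R b * (chi R z b * chi R b z)).
    by apply: eq_bigr => b _; rewrite cz cz' !mulr1.
  by rewrite F1 ez chi_aa !mulr1.
have hdiff : \sum_(b : {ffun 'I_s -> pt}) eps R b = (#|A0|)%:R - (#|A1|)%:R.
  rewrite (bigID (fun b => b \in A1)) /=.
  rewrite (eq_bigr (fun _ => -1)) => [|b]; last by rewrite inE => h; rewrite eps_pp h.
  rewrite [X in _ + X](eq_bigr (fun _ => 1)) => [|b]; last by rewrite inE => /negbTE h; rewrite eps_pp h.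
  rewrite !sumr_const hA0 mulNrn addrC; congr (_%:R - _%:R); apply: eq_card => x; rewrite ?inE /=.
by rewrite -topredE /= inE.
split.
  apply: (@mulIf _ 2); first by rewrite pnatr_eq0.
  rewrite mulfVK ?pnatr_eq0 //.
  move: hsum; rewrite natrD => hs; rewrite hdiff in heps; lra.
apply: (@mulIf _ 2); first by rewrite pnatr_eq0.
rewrite mulfVK ?pnatr_eq0 //.
move: hsum; rewrite natrD => hs; rewrite hdiff in heps; lra.
Qed.
Lemma factor (R : realType) (T : finType) m (P : T -> T -> R) :
  (forall a b, P a b = P b a) ->
  (forall a c, \sum_b P a b * P b c = P a c) ->
  \sum_a P a a = m%:R ->
  exists x : 'I_m -> T -> R, forall a b, \sum_r x r a * x r b = P a b.
Proof.
elim: m P => [|m IH] P Psym Pid Ptr.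
  exists (fun _ _ => 0) => a b; rewrite big_ord0.
  have Pd : forall a, P a a = \sum_b P a b ^+ 2.
    by move=> a'; rewrite -Pid; apply: eq_bigr => b' _; rewrite [P b' a']Psym expr2.
  have nn : forall a, 0 <= P a a by move=> a'; rewrite Pd sumr_ge0 // => b' _; exact: sqr_ge0.
  have z : P a a = 0 by apply: (psumr_eq0P (P := xpredT) _ Ptr).
  move: z; rewrite Pd => /psumr_eq0P => h.
  have := h (fun b _ => sqr_ge0 (P a b)) b isT.
  by move/eqP; rewrite sqrf_eq0 => /eqP.
have [j hj] : exists j, P j j != 0.
  apply/existsP; apply: contraT; rewrite negb_exists => /forallP h.
  move: Ptr; rewrite big1 => [/eqP|a _]; last by apply/eqP; move: (h a); rewrite negbK.
  by rewrite eq_sym pnatr_eq0.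
have Pd : forall a, P a a = \sum_b P a b ^+ 2.
  by move=> a'; rewrite -Pid; apply: eq_bigr => b _; rewrite [P b a']Psym expr2.
have dpos : 0 < P j j.
  by rewrite lt_def hj Pd sumr_ge0 // => b _; exact: sqr_ge0.
set d := P j j in dpos hj.
have sd : Num.sqrt d != 0 by rewrite sqrtr_eq0 -ltNge.
have sd2 : Num.sqrt d * Num.sqrt d = d by rewrite -expr2 sqr_sqrtr // ltW.
pose u b := P j b / Num.sqrt d.
have Pu : forall a, \sum_b P a b * u b = u a.
  move=> a; rewrite /u; under eq_bigr => b _ do rewrite mulrA.
  by rewrite -mulr_suml; under eq_bigr => b _ do rewrite [P j b]Psym; rewrite Pid Psym.
have uu : \sum_b u b * u b = 1.
  transitivity (\sum_b P j b ^+ 2 / d).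
    by apply: eq_bigr => b _; rewrite /u mulrACA -invfM sd2 expr2.
  by rewrite -mulr_suml -Pd divff.
pose P' a b := P a b - u a * u b.
have [x' hx'] : exists x' : 'I_m -> T -> R, forall a b, \sum_r x' r a * x' r b = P' a b.
  apply: IH.
  - by move=> a b; rewrite /P' Psym mulrC.
  - move=> a c; rewrite /P'.
    transitivity (\sum_b P a b * P b c - u c * (\sum_b P a b * u b)
                  - u a * (\sum_b P c b * u b) + u a * u c * \sum_b u b * u b).
      rewrite !mulr_sumr -!sumrB -big_split /=; apply: eq_bigr => b _.
      rewrite [P c b]Psym; ring.
    by rewrite Pid !Pu uu; ring.
  - rewrite /P' sumrB Ptr uu -addn1 natrD; ring.
exists (fun r => if unlift ord0 r is Some r' then x' r' else u) => a b.
rewrite big_ord_recl unlift_none.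
under eq_bigr => i _ do rewrite liftK.
by rewrite hx' /P'; ring.
Qed.
Lemma trNNT0 (R : realType) m n (N : 'M[R]_(m, n)) : \tr (N *m N^T) = 0 -> N = 0.
Proof.
rewrite /mxtrace => h; apply/matrixP => i j; rewrite mxE.
have hi : forall i, 0 <= (N *m N^T) i i.
  by move=> i'; rewrite mxE sumr_ge0 // => k _; rewrite mxE -expr2 sqr_ge0.
have := psumr_eq0P (P := xpredT) (fun i _ => hi i) h (i := i) isT.
rewrite mxE => h2.
have h3 : forall k, 0 <= N i k * N^T k i by move=> k; rewrite mxE -expr2 sqr_ge0.
have := psumr_eq0P (P := xpredT) (fun k _ => h3 k) h2 (i := j) isT.
by rewrite mxE => /eqP; rewrite mulf_eq0 orbb => /eqP.
Qed.

Lemma tight (R : realType) m k (Y : 'M[R]_(m, k)) (c : R) :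
  (Y^T *m Y) *m (Y^T *m Y) = c *: (Y^T *m Y) ->
  \tr (Y^T *m Y) = c * m%:R -> Y *m Y^T = c%:M.
Proof.
move=> hG htr.
set G := Y^T *m Y in hG htr.
set M := Y *m Y^T.
have MM : M *m M = c *: M.
  pose N := M *m M - c *: M.
  have NT : N^T = N by rewrite /N /M linearB /= linearZ /= !trmx_mul !trmxK.
  have N0 : N *m N = 0.
    have -> : N = Y *m (G - c%:M) *m Y^T.
      by rewrite /N /M /G mulmxBr mulmxBl mul_mx_scalar -scalemxAl !mulmxA.
    have GG0 : (G - c%:M) *m G = 0 by rewrite mulmxBl hG mul_scalar_mx subrr.
    have -> : Y *m (G - c%:M) *m Y^T *m (Y *m (G - c%:M) *m Y^T) =
              Y *m ((G - c%:M) *m G) *m ((G - c%:M) *m Y^T) by rewrite /G !mulmxA.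
    by rewrite GG0 mulmx0 mul0mx.
  by apply/eqP; rewrite -subr_eq0; apply/eqP; apply: trNNT0; rewrite NT N0 mxtrace0.
have trM : \tr M = c * m%:R by rewrite /M mxtrace_mulC.
apply/eqP; rewrite -subr_eq0; apply/eqP; apply: trNNT0.
rewrite linearB /= tr_scalar_mx /M trmx_mul trmxK -/M.
rewrite mulmxBl !mulmxBr MM mul_mx_scalar !mul_scalar_mx.
rewrite !linearB !linearZ /= mxtrace_scalar trM -mulr_natr; ring.
Qed.

Lemma tau_sym (R : realType) x y : tau R x y = tau R y x.
Proof. by case: x; case: y. Qed.

Lemma Gam_sym (R : realType) s (a b : {ffun 'I_s -> pt}) : Gam R a b = Gam R b a.
Proof. by rewrite /Gam eq_sym tau_sym chi_sym. Qed.

Lemma ipX (R : realType) (T : finType) m k l (x : 'I_m -> T -> R)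
  (f : 'I_k -> T) (g : 'I_l -> T) (al be : R) i j :
  ip (\matrix_(r, j) (x r (f j) * al)) (\matrix_(r, j) (x r (g j) * be)) i j =
  al * be * \sum_r x r (f i) * x r (g j).
Proof.
rewrite /ip mulr_sumr; apply: eq_bigr => r _; rewrite !mxE; ring.
Qed.

Lemma tau_d (R : realType) t0 : tau R t0 t0 = 1 \/ tau R t0 t0 = -1.
Proof. by case: t0; [left|right]. Qed.

Lemma block_ETF (R : realType) s m (x : 'I_m -> {ffun 'I_s -> pt} -> R) (t0 : bool) :
  let t : R := (2 ^ s)%:R in
  let A := [set a : {ffun 'I_s -> pt} | pp R a == t0] in
  let d := t + tau R t0 t0 in
  2 <= t ->
  (forall a b, \sum_r x r a * x r b = Gam R a b / (3 * t)) ->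
  m%:R * 3 = t * t - 1 ->
  #|A|%:R * 2 = t * (t - tau R t0 t0) ->
  is_ETF (\matrix_(r < m, j < #|A|) (x r (enum_val j) * Num.sqrt (3 * t / d))).
Proof.
move=> t A d t2 hx hm hn.
have ts := tau_d R t0.
have dpos : 0 < d by rewrite /d; case: ts => ->; lra.
have tpos : 0 < t by lra.
have al2 : Num.sqrt (3 * t / d) * Num.sqrt (3 * t / d) = 3 * t / d.
  by rewrite -expr2 sqr_sqrtr // divr_ge0 // ?mulr_ge0 // ltW.
have eA : forall j : 'I_#|A|, pp R (enum_val j) = t0.
  by move=> j; have := enum_valP j; rewrite inE => /eqP.
have Gram : forall i j, ip (\matrix_(r < m, j < #|A|) (x r (enum_val j) * Num.sqrt (3 * t / d)))
     (\matrix_(r < m, j < #|A|) (x r (enum_val j) * Num.sqrt (3 * t / d))) i j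
     = Gam R (enum_val i) (enum_val j) / d.
  move=> i j; rewrite ipX al2 hx; field.
  by apply/andP; split; rewrite ?gt_eqF // mulr_gt0.
set V := \matrix_(r < m, j < #|A|) _ in Gram *.
have Gii : forall i : 'I_#|A|, Gam R (enum_val i) (enum_val i) = d.
  by move=> i; rewrite /Gam eqxx chi_aa eA !mulr1.
split.
- by move=> i; rewrite Gram Gii divff // gt_eqF.
- exists (1 / d) => i j hij.
  have neq : enum_val i != enum_val j by apply: contra hij => /eqP /enum_val_inj ->.
  rewrite Gram /Gam (negbTE neq).
  rewrite mulr0 add0r !eA !normrM chi_pm mulr1 normfV (gtr0_norm dpos).
  have -> : `|tau R t0 t0| = 1 by case: ts => ->; rewrite ?normrN normr1.
  by [].
- have VTV : V^T *m V = \matrix_(i, j) (Gam R (enum_val i) (enum_val j) / d).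
    by apply/matrixP => i j; rewrite !mxE -Gram /ip; apply: eq_bigr => r _; rewrite mxE.
  have nA : #|A|%:R = t * (t - tau R t0 t0) / 2 by rewrite -hn; field.
  have mR : m%:R = (t * t - 1) / 3 by rewrite -hm; field.
  have -> : (#|A|%:R / m%:R) = 3 * t / (2 * d).
    rewrite nA mR /d; case: ts => ->; field; rewrite -/t.
      by apply/andP; split; apply/eqP; nra.
    by apply/andP; split; apply/eqP; nra.
  apply: tight.
    rewrite VTV; apply/matrixP => i j; rewrite !mxE.
    transitivity ((\sum_(b in A) Gam R (enum_val i) b * Gam R b (enum_val j)) / (d * d)).
      rewrite mulr_suml [in RHS]big_enum_val; apply: eq_bigr => l _; rewrite !mxE; field.
      by rewrite gt_eqF.
    rewrite (eq_bigl (fun b => pp R b == t0)) => [|b]; last by rewrite inE.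
    rewrite Gam_block ?eA //; field.
    by rewrite gt_eqF.
  rewrite VTV /mxtrace (eq_bigr (fun _ => 1)) => [|i _]; last by rewrite mxE Gii divff // gt_eqF.
  rewrite sumr_const card_ord nA mR /d; case: ts => ->; field; rewrite -/t.
    by apply/eqP; nra.
  by apply/eqP; nra.
Qed.


Lemma dvd3 n : (3 %| (2 ^ 2) ^ n - 1)%N.
Proof.
elim: n => // n IH.
have h1 := expn_gt0 (2 ^ 2) n.
rewrite expnS (_ : (2 ^ 2 * (2 ^ 2) ^ n - 1 = 3 * (2 ^ 2) ^ n + ((2 ^ 2) ^ n - 1))%N).
  by rewrite dvdn_add // dvdn_mulr.
move: h1; set y := ((2 ^ 2) ^ n)%N; rewrite (_ : (2 ^ 2 = 4)%N) //; lia.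
Qed.

Lemma sum_eps (R : realType) s : \sum_(b : {ffun 'I_s -> pt}) eps R b = (2 ^ s)%:R.
Proof.
pose z : {ffun 'I_s -> pt} := [ffun _ => (false, false)].
have ez : eps R z = 1 by rewrite /eps big1 // => i _; rewrite ffunE sgF.
have cz : forall b, chi R z b = 1 by move=> b; rewrite /chi big1 // => i _; rewrite ffunE sgF.
have cz' : forall b, chi R b z = 1 by move=> b; rewrite chi_sym cz.
transitivity (\sum_b eps R b * (chi R z b * chi R b z)).
  by apply: eq_bigr => b _; rewrite cz cz' !mulr1.
by rewrite F1 ez chi_aa !mulr1.
Qed.

Lemma tau_eps (R : realType) s (a : {ffun 'I_s -> pt}) : tau R (pp R a) (pp R a) = - eps R a.
Proof. by rewrite eps_pp; case: (pp R a); rewrite /tau /= ?opprK. Qed.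

Theorem theorem4 (R : realType) (s : nat) : (2 <= s)%N ->
  exists (V : 'M[R]_((2 ^ (2 * s) - 1) %/ 3, 2 ^ (s - 1) * (2 ^ s - 1)))
         (W : 'M[R]_((2 ^ (2 * s) - 1) %/ 3, 2 ^ (s - 1) * (2 ^ s + 1))),
    [/\ is_ETF V, is_ETF W & mutually_unbiased V W].
Proof.
case: s => [//|s'] hs.
pose t : R := (2 ^ s'.+1)%:R.
have t2 : 2 <= t by rewrite /t ler_nat expnS leq_pmulr // expn_gt0.
set m := ((2 ^ (2 * s'.+1) - 1) %/ 3)%N.
have hm : m%:R * 3 = t * t - 1.
  have d3 : (3 %| 2 ^ (2 * s'.+1) - 1)%N by rewrite expnM dvd3.
  rewrite /m -natrM divnK // natrB ?expn_gt0 // mul2n -addnn expnD natrM.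
  by [].
pose A1 := [set a : {ffun 'I_s'.+1 -> pt} | pp R a == true].
pose A0 := [set a : {ffun 'I_s'.+1 -> pt} | pp R a == false].
have [c1 c0] := cardsR R s'.+1.
have hA1 : A1 = [set a | pp R a] by apply/setP => a; rewrite !inE eqb_id.
have hA0 : A0 = [set a | ~~ pp R a] by apply/setP => a; rewrite !inE eqbF_neg.
have hn1R : #|A1|%:R * 2 = t * (t - tau R true true) by rewrite hA1 c1 /tau /=; field.
have hn0R : #|A0|%:R * 2 = t * (t - tau R false false) by rewrite hA0 c0 /tau /=; field.
have hn1 : #|A1| = (2 ^ (s'.+1 - 1) * (2 ^ s'.+1 - 1))%N.
  apply/eqP; rewrite -(eqr_nat R); apply/eqP; apply: (@mulIf _ 2); first by rewrite pnatr_eq0.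
  rewrite hn1R /tau /= subn1 /= natrM natrB ?expn_gt0 // /t expnS !natrM; ring.
have hn0 : #|A0| = (2 ^ (s'.+1 - 1) * (2 ^ s'.+1 + 1))%N.
  apply/eqP; rewrite -(eqr_nat R); apply/eqP; apply: (@mulIf _ 2); first by rewrite pnatr_eq0.
  rewrite hn0R /tau /= subn1 /= natrM natrD /t expnS !natrM; ring.
rewrite -hn1 -hn0.
have tpos : 0 < t by lra.
have [x hx] : exists x : 'I_m -> {ffun 'I_s'.+1 -> pt} -> R,
    forall a b, \sum_r x r a * x r b = Gam R a b / (3 * t).
  apply: factor.
  - by move=> a b; rewrite Gam_sym.
  - move=> a c.
    transitivity ((\sum_b Gam R a b * Gam R b c) / (3 * t * (3 * t))).
      rewrite mulr_suml; apply: eq_bigr => b _; field; lra.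
    rewrite Gam_full; field; lra.
  - transitivity ((\sum_(a : {ffun 'I_s'.+1 -> pt}) (t - eps R a)) / (3 * t)).
      rewrite mulr_suml; apply: eq_bigr => a _; by rewrite /Gam eqxx chi_aa tau_eps /= !mulr1.
    rewrite sumrB sum_eps sumr_const card_ffun card_prod card_bool card_ord -/t.
    rewrite expnMn -[t *+ _]mulr_natr natrM -/t (_ : m%:R = (t * t - 1) / 3); last by rewrite -hm; field.
    field; lra.
pose V := \matrix_(r < m, j < #|A1|) (x r (enum_val j) * Num.sqrt (3 * t / (t + tau R true true))).
pose W := \matrix_(r < m, j < #|A0|) (x r (enum_val j) * Num.sqrt (3 * t / (t + tau R false false))).
exists V, W; split.
- exact: (block_ETF (t0 := true)).
- exact: (block_ETF (t0 := false)).
exists (`|Num.sqrt (3 * t / (t + tau R true true)) * Num.sqrt (3 * t / (t + tau R false false))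
          * Num.sqrt 3 / (3 * t)|) => i j.
rewrite /V /W ipX hx.
have e1 : pp R (enum_val i) = true by have := enum_valP i; rewrite inE => /eqP.
have e0 : pp R (enum_val j) = false by have := enum_valP j; rewrite inE => /eqP.
have neq : enum_val i != enum_val j by apply/eqP => h; move: e1; rewrite h e0.
rewrite /Gam (negbTE neq) e1 e0 /tau /= mulr0 add0r.
set a1 := Num.sqrt _; set a0 := Num.sqrt (_ / _).
rewrite (_ : a1 * a0 * (Num.sqrt 3 * chi R (enum_val i) (enum_val j) / (3 * t)) =
   a1 * a0 * Num.sqrt 3 / (3 * t) * chi R (enum_val i) (enum_val j)); last by ring.
by rewrite normrM chi_pm mulr1.
Qed.
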